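(* Let $N, M \in \mathbb{Z}^{+}$. Let $(\mathbf{a},\mathbf{b})$ be a Golay complementary pair of length $N$ and let $(\mathbf{c},\mathbf{d})$ be a Golay complementary pair of length $M$, all with complex entries. Let $\xi_1,\xi_2 \in \mathbb{C}$ with $|\xi_1| = |\xi_2| = 1$, and let $k, l, m \in \mathbb{Z}$. Define the sequences $\mathbf{f}$ and $\mathbf{g}$ through their polynomial representations $$p_{\mathbf{f}}(z) = \xi_1\, p_{\mathbf{a}}(z^k)\, p_{\mathbf{c}}(z^l) + \xi_2\, p_{\mathbf{b}}(z^k)\, p_{\mathbf{d}}(z^l)\, z^{m},$$ $$p_{\mathbf{g}}(z) = \xi_1\, p_{\mathbf{a}}(z^k)\, p_{\tilde{\mathbf{d}}}(z^l) - \xi_2\, p_{\mathbf{b}}(z^k)\, p_{\tilde{\mathbf{c}}}(z^l)\, z^{m}.$$ Then $(\mathbf{f},\mathbf{g})$ is a Golay complementary pair.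
   Context: For a sequence $\mathbf{a} = (a_0, a_1, \dots, a_{N-1})$ of complex numbers, its polynomial representation is $p_{\mathbf{a}}(z) = a_{N-1}z^{N-1} + \dots + a_1 z + a_0$ for $z \in \mathbb{C}$ (nonzero when negative powers occur). More generally, a finitely supported complex sequence $(x_i)_{i\in\mathbb{Z}}$ is identified with the Laurent polynomial $p_{\mathbf{x}}(z)=\sum_i x_i z^i$; when $k,l,m$ may be negative, $\mathbf{f}$ and $\mathbf{g}$ denote the (finitely supported, $\mathbb{Z}$-indexed) coefficient sequences of the Laurent polynomials above. For a sequence $\mathbf{a}=(a_0,\dots,a_{N-1})$, $\tilde{\mathbf{a}} = (a_{N-1}^*, a_{N-2}^*, \dots, a_0^* )$ denotes the sequence reversed in order and element-wise complex conjugated. The aperiodic autocorrelation of a finitely supported sequence $\mathbf{x}$ is $\rho_{\mathbf{x}}(j) = \sum_{i} x_i^* x_{i+j}$ for $j\in\mathbb{Z}$ (for a sequence of length $N$ indexed $0,\dots,N-1$ this is $\sum_{i=0}^{N-j-1} a_i^* a_{i+j}$ for $0\le j\le N-1$, $\rho_{\mathbf{a}}(-j)=\rho_{\mathbf{a}}(j)^*$, and $0$ otherwise). A pair of sequences $(\mathbf{x},\mathbf{y})$ is a Golay complementary pair if $\rho_{\mathbf{x}}(j) + \rho_{\mathbf{y}}(j) = 0$ for all $j \neq 0$; equivalently, $|p_{\mathbf{x}}(z)|^2 + |p_{\mathbf{y}}(z)|^2$ is constant for all $z$ on the unit circle. A Golay complementary pair ''of length $N$'' consists of two sequences each of length $N$.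 *)

(* Defs.v *)
(* Complex numbers are modelled as R[i] = complex R for an
   arbitrary real closed field R (R = the reals gives C). *)
From HB Require Import structures.
From mathcomp Require Import all_boot all_order all_algebra.
From mathcomp Require Export complex.
Set Implicit Arguments. Unset Strict Implicit. Unset Printing Implicit Defensive.
Import Order.TTheory GRing.Theory Num.Theory.
Local Open Scope ring_scope.

Section Laurent.
Variable C : numClosedFieldType.

(* A Laurent polynomial sum_t c_t z^(e_t) is represented by a finite list of
   monomials (c, e); its coefficient sequence x : int -> C is finitely
   supported. *)
Definition lpoly := seq (C * int).

Definition lcoef (p : lpoly) (i : int) : C := \sum_(t <- p | t.2 == i) t.1.

Definition lsupp (p : lpoly) : seq int := undup [seq t.2 | t <- p].

Definition ladd (p q : lpoly) : lpoly := p ++ q.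
Definition lscale (c : C) (p : lpoly) : lpoly := [seq (c * t.1, t.2) | t <- p].
Definition lmul (p q : lpoly) : lpoly :=
  [seq (t.1 * u.1, t.2 + u.2) | t <- p, u <- q].
Definition lmono (m : int) : lpoly := [:: (1, m)].
Definition lsubst (k : int) (p : lpoly) : lpoly := [seq (t.1, t.2 * k) | t <- p].

Definition pseq (N : nat) (a : 'I_N -> C) : lpoly :=
  [seq (a i, (i : nat)%:Z) | i <- enum 'I_N].

Definition tilde (N : nat) (a : 'I_N -> C) : 'I_N -> C :=
  fun i => (a (rev_ord i))^*.

(* aperiodic autocorrelation rho_x(j) = sum_i x_i^* x_{i+j} (sum over the
   support of x, outside of which the summand vanishes) *)
Definition acorr (p : lpoly) (j : int) : C :=
  \sum_(i <- lsupp p) (lcoef p i)^* * lcoef p (i + j).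

Definition golay_pair (x y : lpoly) : Prop :=
  forall j : int, j != 0 -> acorr x j + acorr y j = 0.

End Laurent.

(* Main.v *)
Require Import Defs.
From HB Require Import structures.
From mathcomp Require Import all_boot all_order all_algebra.
From mathcomp Require Import complex.
From mathcomp Require Import ring zify.
Import Order.TTheory GRing.Theory Num.Theory.
Set Implicit Arguments. Unset Strict Implicit.
Local Open Scope ring_scope.

Section Aux.
Variable C : numClosedFieldType.
Implicit Types (P Q : lpoly C) (F G : int -> C).

Definition BB P Q F := \sum_(t <- P) \sum_(u <- Q) t.1^* * u.1 * F (u.2 - t.2).

Lemma eq_BB P Q F G : (forall e, F e = G e) -> BB P Q F = BB P Q G.
Proof. by move=> h; apply: eq_bigr => t _; apply: eq_bigr => u _; rewrite h. Qed.

Lemma BBcatl P1 P2 Q F : BB (ladd P1 P2) Q F = BB P1 Q F + BB P2 Q F.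
Proof. by rewrite /BB /ladd big_cat. Qed.

Lemma BBcatr P Q1 Q2 F : BB P (ladd Q1 Q2) F = BB P Q1 F + BB P Q2 F.
Proof. by rewrite /BB /ladd -big_split; apply: eq_bigr => t _; rewrite big_cat. Qed.

Lemma BBscalel x P Q F : BB (lscale x P) Q F = x^* * BB P Q F.
Proof.
rewrite /BB /lscale big_map mulr_sumr; apply: eq_bigr => t _.
rewrite mulr_sumr; apply: eq_bigr => u _ /=. by rewrite rmorphM !mulrA.
Qed.

Lemma BBscaler x P Q F : BB P (lscale x Q) F = x * BB P Q F.
Proof.
rewrite /BB /lscale mulr_sumr; apply: eq_bigr => t _.
rewrite big_map mulr_sumr; apply: eq_bigr => u _ /=. by rewrite mulrCA !mulrA.
Qed.

Lemma BBadd P Q F G : BB P Q F + BB P Q G = BB P Q (fun e => F e + G e).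
Proof.
rewrite /BB -big_split; apply: eq_bigr => t _.
rewrite -big_split; apply: eq_bigr => u _ /=. by rewrite mulrDr.
Qed.

Lemma BBmulc P Q F c : BB P Q (fun e => F e * c) = BB P Q F * c.
Proof.
rewrite /BB mulr_suml; apply: eq_bigr => t _.
rewrite mulr_suml; apply: eq_bigr => u _ /=. by rewrite mulrA.
Qed.

Lemma BBmul P1 P2 Q1 Q2 F :
  BB (lmul P1 P2) (lmul Q1 Q2) F =
  BB P1 Q1 (fun e => BB P2 Q2 (fun e' => F (e + e'))).
Proof.
rewrite /BB /lmul big_allpairs_dep; apply: eq_bigr => t1 _.
under eq_bigr do rewrite big_allpairs_dep.
rewrite exchange_big; apply: eq_bigr => u1 _ /=.
rewrite mulr_sumr; apply: eq_bigr => t2 _.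
rewrite mulr_sumr; apply: eq_bigr => u2 _ /=.
rewrite rmorphM.
have -> : u1.2 + u2.2 - (t1.2 + t2.2) = u1.2 - t1.2 + (u2.2 - t2.2) by ring.
ring.
Qed.

Lemma BBmono m F : BB (lmono C m) (lmono C m) F = F 0.
Proof. by rewrite /BB /lmono !big_seq1 /= rmorph1 !mul1r subrr. Qed.

Lemma BBmonor P Q m F : BB P (lmul Q (lmono C m)) F = BB P Q (fun e => F (e + m)).
Proof.
rewrite /BB /lmul /lmono; apply: eq_bigr => t _.
rewrite big_allpairs_dep; apply: eq_bigr => u _.
rewrite big_seq1 /= mulr1. congr (_ * F _). ring.
Qed.

Lemma BBsubst k P Q F : BB (lsubst k P) (lsubst k Q) F = BB P Q (fun e => F (e * k)).
Proof.
rewrite /BB /lsubst big_map; apply: eq_bigr => t _.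
rewrite big_map; apply: eq_bigr => u _ /=. by rewrite mulrBl.
Qed.

Lemma BBpseq N (a b : 'I_N -> C) F :
  BB (pseq a) (pseq b) F = \sum_(i < N) \sum_(j < N) (a i)^* * b j * F (j%:Z - i%:Z).
Proof.
rewrite /BB /pseq big_map big_enum /=; apply: eq_bigr => i _.
by rewrite big_map big_enum.
Qed.

Lemma BBconj P Q F : BB P Q F = (BB Q P (fun x => (F (- x))^*))^*.
Proof.
rewrite /BB rmorph_sum exchange_big; apply: eq_bigr => t _.
rewrite rmorph_sum; apply: eq_bigr => u _ /=.
rewrite !rmorphM opprB /= (conjCK t.1) (conjCK (F _)). by rewrite [t.1 * _]mulrC. Qed.

Definition dl (j : int) : int -> C := fun e => (e == j)%:R.

Lemma acorrE p j : acorr p j = BB p p (dl j).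
Proof.
rewrite /acorr /BB /lcoef /dl.
under eq_bigr => i _ do rewrite rmorph_sum big_distrl big_mkcond /=.
rewrite [LHS]exchange_big /=.
apply: eq_big_seq => t tp.
have ht : t.2 \in lsupp p by rewrite /lsupp mem_undup; apply: map_f.
rewrite (bigD1_seq t.2) ?undup_uniq //= eqxx.
rewrite [X in _ + X]big1 ?addr0; last first.
  by move=> i hi; rewrite eq_sym (negbTE hi).
rewrite big_distrr /= big_mkcond /=; apply: eq_bigr => u _.
rewrite subr_eq addrC; case: eqP => _; by rewrite ?mulr1 ?mulr0.
Qed.


Lemma BBdec (s : seq int) R H : uniq s ->
  (forall t u, t \in R -> u \in R -> u.2 - t.2 \in s) ->
  BB R R H = \sum_(e <- s) H e * BB R R (dl e).
Proof.
move=> us hs; rewrite /BB; symmetry.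
under eq_bigr do rewrite mulr_sumr.
rewrite exchange_big; apply: eq_big_seq => t tR.
under eq_bigr do rewrite mulr_sumr.
rewrite exchange_big; apply: eq_big_seq => u uR.
rewrite (bigD1_seq (u.2 - t.2)) ?hs //= /dl eqxx mulr1 [X in _ + X]big1 ?addr0.
  by rewrite mulrC.
by move=> e he; rewrite eq_sym (negbTE he) mulr0 mulr0.
Qed.

Lemma GD P Q : (forall j, j != 0 -> BB P P (dl j) + BB Q Q (dl j) = 0) ->
  forall H, BB P P H + BB Q Q H = H 0 * (BB P P (dl 0) + BB Q Q (dl 0)).
Proof.
move=> hj H.
set s := undup (0 :: [seq u.2 - t.2 | t <- P, u <- P] ++ [seq u.2 - t.2 | t <- Q, u <- Q]).
have us : uniq s by rewrite undup_uniq.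
have hP : forall t u, t \in P -> u \in P -> u.2 - t.2 \in s.
  move=> t u tP uP; rewrite mem_undup inE mem_cat; apply/orP; right; apply/orP; left.
  by apply: (allpairs_f (fun t u => u.2 - t.2)).
have hQ : forall t u, t \in Q -> u \in Q -> u.2 - t.2 \in s.
  move=> t u tQ uQ; rewrite mem_undup inE mem_cat; apply/orP; right; apply/orP; right.
  by apply: (allpairs_f (fun t u => u.2 - t.2)).
rewrite [in LHS](@BBdec s P) // [in LHS](@BBdec s Q) //.
rewrite -big_split /= (bigD1_seq 0) //=; last by rewrite mem_undup inE eqxx.
rewrite -mulrDr [X in _ + X]big1 ?addr0 //.
by move=> e he; rewrite -mulrDr hj // mulr0.
Qed.

Lemma tildeK N (a : 'I_N -> C) i : (tilde a i)^* = a (rev_ord i).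
Proof. by rewrite /tilde conjCK. Qed.

Lemma BBtilde N (a b : 'I_N -> C) F :
  BB (pseq (tilde a)) (pseq (tilde b)) F = BB (pseq b) (pseq a) F.
Proof.
rewrite !BBpseq exchange_big /=.
rewrite (reindex_inj rev_ord_inj) /=; apply: eq_bigr => i _.
rewrite (reindex_inj rev_ord_inj) /=; apply: eq_bigr => j _.
rewrite tildeK /tilde !rev_ordK.
have hi := ltn_ord i; have hj := ltn_ord j.
have E : ((N - i.+1)%N%:Z - (N - j.+1)%N%:Z) = j%:Z - i%:Z by lia.
by rewrite E [a j * _]mulrC.
Qed.

Lemma K3gen A P1 Q1 K F : (forall H, BB P1 P1 H + BB Q1 Q1 H = H 0 * K) ->
  BB (lmul A P1) (lmul A P1) F + BB (lmul A Q1) (lmul A Q1) F = K * BB A A F.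
Proof.
move=> hH; rewrite !BBmul BBadd (@eq_BB _ _ _ (fun e => F e * K)).
  by rewrite BBmulc mulrC.
by move=> e; rewrite hH addr0.
Qed.

Lemma LZ P Q m F : BB (lmul P (lmono C m)) (lmul Q (lmono C m)) F = BB P Q F.
Proof. by rewrite BBmul; apply: eq_BB => e; rewrite BBmono addr0. Qed.

End Aux.
Arguments dl {C}.

Theorem theorem1 (R : rcfType) (N M : nat) (hN : (0 < N)%N) (hM : (0 < M)%N)
  (a b : 'I_N -> R[i]) (c d : 'I_M -> R[i])
  (hab : golay_pair (pseq a) (pseq b))
  (hcd : golay_pair (pseq c) (pseq d))
  (xi1 xi2 : R[i]) (h1 : `|xi1| = 1) (h2 : `|xi2| = 1)
  (k l m : int) :
  let f := ladd (lscale xi1 (lmul (lsubst k (pseq a)) (lsubst l (pseq c))))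
                (lscale xi2 (lmul (lmul (lsubst k (pseq b)) (lsubst l (pseq d)))
                                  (lmono _ m))) in
  let g := ladd (lscale xi1 (lmul (lsubst k (pseq a)) (lsubst l (pseq (tilde d)))))
                (lscale (- xi2) (lmul (lmul (lsubst k (pseq b))
                                            (lsubst l (pseq (tilde c))))
                                      (lmono _ m))) in
  golay_pair f g.
Proof.
move=> f g j hj.
rewrite !acorrE /f /g !BBcatl !BBcatr !BBscalel !BBscaler.
set A := lsubst k (pseq a); set Bq := lsubst k (pseq b).
set Cc := lsubst l (pseq c); set D := lsubst l (pseq d).
set Cc' := lsubst l (pseq (tilde c)); set D' := lsubst l (pseq (tilde d)).
set Z := lmono _ m.
have K1 F : BB (lmul A Cc) (lmul (lmul Bq D) Z) F = BB (lmul A D') (lmul (lmul Bq Cc') Z) F.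
  by rewrite !BBmonor !BBmul; apply: eq_BB => e; rewrite !BBsubst BBtilde.
have K2 F : BB (lmul (lmul Bq D) Z) (lmul A Cc) F = BB (lmul (lmul Bq Cc') Z) (lmul A D') F.
  by rewrite BBconj K1 -BBconj.
have hcd' : forall j, j != 0 -> BB (pseq c) (pseq c) (dl j) + BB (pseq d) (pseq d) (dl j) = 0.
  by move=> j' hj'; rewrite -!acorrE; apply: hcd.
have hab' : forall j, j != 0 -> BB (pseq a) (pseq a) (dl j) + BB (pseq b) (pseq b) (dl j) = 0.
  by move=> j' hj'; rewrite -!acorrE; apply: hab.
set Kcd := BB (pseq c) (pseq c) (dl 0) + BB (pseq d) (pseq d) (dl 0).
set Kab := BB (pseq a) (pseq a) (dl 0) + BB (pseq b) (pseq b) (dl 0).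
have Hcd H : BB Cc Cc H + BB D' D' H = H 0 * Kcd.
  by rewrite !BBsubst BBtilde (GD hcd') mul0r.
have Hdc H : BB D D H + BB Cc' Cc' H = H 0 * Kcd.
  by rewrite !BBsubst BBtilde addrC (GD hcd') mul0r.
have K3 := K3gen A (dl j) Hcd.
have K4 := K3gen Bq (dl j) Hdc.
rewrite !LZ in K4 *.
have K5 : BB A A (dl j) + BB Bq Bq (dl j) = 0.
  by rewrite !BBsubst (GD hab') mul0r /dl eq_sym (negbTE hj) mul0r.
have e1 : xi1^* * xi1 = 1 by rewrite mulrC -normCK h1 expr1n.
have e2 : xi2^* * xi2 = 1 by rewrite mulrC -normCK h2 expr1n.
have e3 : (- xi2)^* = - xi2^* by rewrite rmorphN.
rewrite e3 K1 K2.
transitivity (xi1^* * xi1 * (BB (lmul A Cc) (lmul A Cc) (dl j) + BB (lmul A D') (lmul A D') (dl j))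
  + xi2^* * xi2 * (BB (lmul Bq D) (lmul Bq D) (dl j) + BB (lmul Bq Cc') (lmul Bq Cc') (dl j))).
  ring.
by rewrite e1 e2 !mul1r K3 K4 -mulrDr K5 mulr0.
Qed.
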